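(* Let $A=[a_{ij}]\in M_{m,n}(\mathbb{R})$ have rank $r\geq 1$ and be properly arranged. Then $A$ is diagonally eliminable up to $r$. Moreover, $|a^{(2k)}_{k+1,k+1}|\geq |a^{(2k)}_{ij}|$ for all $k$ with $0\leq k<r$ and all $i,j$ with $k+1\leq i\leq m$, $k+1\leq j\leq n$.
   Context: Gauss-Jordan procedure: for $A\in M_{m,n}(\mathbb{R})$ set $A^{(0)}=A$. For $k\geq 0$, if $A^{(2k)}=[a^{(2k)}_{ij}]$ is defined and $a^{(2k)}_{k+1,k+1}\neq 0$, let $\mathcal{G}_{2k+1}$ be the $m\times m$ diagonal matrix with all diagonal entries $1$ except the $(k+1,k+1)$ entry, which is $1/a^{(2k)}_{k+1,k+1}$, and set $A^{(2k+1)}=\mathcal{G}_{2k+1}A^{(2k)}=[a^{(2k+1)}_{ij}]$; then let $\mathcal{G}_{2k+2}=[g_{ij}]_{m\times m}$ with $g_{ii}=1$, $g_{i,k+1}=-a^{(2k+1)}_{i,k+1}$ for $i\neq k+1$, and all other entries $0$, and set $A^{(2k+2)}=\mathcal{G}_{2k+2}A^{(2k+1)}$. A matrix $A$ of rank $r\geq 1$ is diagonally eliminable up to $r$ if for each $k=1,\dots,r$ the matrix $A^{(2k-2)}$ is defined and $a^{(2k-2)}_{kk}\neq 0$. Minors: $m^{i_1\dots i_p}_{j_1\dots j_p}$ (increasing indices) is the determinant of the submatrix of $A$ with rows $i_1,\dots,i_p$ and columns $j_1,\dots,j_p$; $m_k=m^{1\dots k}_{1\dots k}$. $A$ (of rank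 $r\geq 1$) is properly arranged if $|a_{ij}|\leq|a_{11}|$ for all $1\leq i\leq m$, $1\leq j\leq n$, and for every integer $k$ with $1\leq k<\min\{m,n\}$ one has $|m^{1\dots k\,i}_{1\dots k\,j}|\leq|m_{k+1}|$ for all $k+1\leq i\leq m$, $k+1\leq j\leq n$. *)

(* Defs.v *)
(* Indices are 0-based: paper's row/column k+1 is our k. *)
From HB Require Import structures.
From mathcomp Require Import all_boot all_order all_algebra.
Set Implicit Arguments. Unset Strict Implicit. Unset Printing Implicit Defensive.
Import Order.TTheory GRing.Theory Num.Theory.
Local Open Scope ring_scope.

Section GJ.
Variables (R : fieldType) (m n : nat).

Definition gj_G1 (k : nat) (b : R) : 'M[R]_m :=
  \matrix_(i, j) (if i == j then (if val i == k then b^-1 else 1) else 0).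

Definition gj_G2 (k : nat) (B : 'M[R]_(m, n)) : 'M[R]_m :=
  \matrix_(i, j) (if i == j then 1
                  else if val j == k then
                         (if insub k : option 'I_n is Some c then - B i c else 0)
                       else 0).

Definition gj_step1 (k : nat) (B : 'M[R]_(m, n)) : option 'M[R]_(m, n) :=
  match insub k : option 'I_m, insub k : option 'I_n with
  | Some p, Some q => if B p q != 0 then Some (gj_G1 k (B p q) *m B) else None
  | _, _ => None
  end.

Definition gj_step2 (k : nat) (B : 'M[R]_(m, n)) : option 'M[R]_(m, n) :=
  if (k < m)%N && (k < n)%N then Some (gj_G2 k B *m B) else None.

(* gj A p = Some A^{(p)} if A^{(p)} is defined, None otherwise *)
Fixpoint gj (A : 'M[R]_(m, n)) (p : nat) : option 'M[R]_(m, n) :=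
  match p with
  | 0 => Some A
  | p'.+1 => if odd p' then obind (gj_step2 p'./2) (gj A p')
             else obind (gj_step1 p'./2) (gj A p')
  end.

Definition diag_eliminable (A : 'M[R]_(m, n)) (r : nat) : Prop :=
  forall k : nat, (k < r)%N ->
    exists B, gj A (2 * k) = Some B /\
      exists (p : 'I_m) (q : 'I_n), val p = k /\ val q = k /\ B p q != 0.

(* row selector for rows 0..k-1, i (and similarly columns) *)
Definition bsel (N k : nat) (i : 'I_N) (a : 'I_k.+1) : 'I_N :=
  insubd i (if (val a < k)%N then val a else val i).

(* minor m^{1..k i}_{1..k j} (0-based: rows 0..k-1,i ; cols 0..k-1,j) *)
Definition bminor (A : 'M[R]_(m, n)) (k : nat) (i : 'I_m) (j : 'I_n) : R :=
  \det (\matrix_(a < k.+1, b < k.+1) A (bsel i a) (bsel j b)).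
End GJ.

Definition properly_arranged (R : realFieldType) (m n : nat) (A : 'M[R]_(m, n)) : Prop :=
  (forall (p : 'I_m) (q : 'I_n), val p = 0%N -> val q = 0%N ->
     forall (i : 'I_m) (j : 'I_n), `|A i j| <= `|A p q|) /\
  (forall k : nat, (1 <= k)%N -> (k < minn m n)%N ->
     forall (i : 'I_m) (j : 'I_n), (k <= i)%N -> (k <= j)%N ->
     forall (p : 'I_m) (q : 'I_n), val p = k -> val q = k ->
       `|bminor A k i j| <= `|bminor A k p q|).

(* Main.v *)
Require Import Defs.
From HB Require Import structures.
From mathcomp Require Import all_boot all_order all_algebra.
From mathcomp Require Import zify.
Set Implicit Arguments. Unset Strict Implicit. Unset Printing Implicit Defensive.
Import Order.TTheory GRing.Theory Num.Theory.
Local Open Scope ring_scope.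

Lemma val_bsel N k (i : 'I_N) (a : 'I_k.+1) : (k <= i)%N ->
  (bsel i a : nat) = if (a < k)%N then (a : nat) else i.
Proof.
move=> ki; rewrite /bsel (val_insubd i); case: (ltnP a k) => ak.
  have -> : (a < N)%N by have := ltn_ord i; lia.
  by [].
by rewrite ltn_ord.
Qed.

Lemma bsel_max N k (i : 'I_N) : bsel i (@ord_max k) = i.
Proof. by apply: val_inj; rewrite /bsel val_insubd /= ltnn ltn_ord. Qed.

Lemma bsel_lt N k (i i' : 'I_N) (a : 'I_k.+1) : (a < k)%N -> (k <= i)%N -> (k <= i')%N ->
  bsel i a = bsel i' a.
Proof. by move=> ak ki ki'; apply: val_inj => /=; rewrite !val_bsel // ak. Qed.

Lemma bsel_inj N k (i : 'I_N) : (k <= i)%N -> injective (@bsel N k i).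
Proof.
move=> ki a b /(congr1 val) /=; rewrite !val_bsel //.
have := ltn_ord a; have := ltn_ord b.
case: (ltnP a k) => ak; case: (ltnP b k) => bk => ha hb h; apply: val_inj => /=; move: h ha hb; rewrite /=; lia.
Qed.

Lemma bsel0 N (i : 'I_N) (a : 'I_1) : bsel i a = i.
Proof. by apply: val_inj => /=; rewrite val_bsel. Qed.


Section S.
Variables (R : realFieldType) (m n : nat).

Definition Pm k (M : 'M[R]_m) (i : 'I_m) : 'M[R]_k.+1 :=
  \matrix_(a, b) M (bsel i a) (bsel i b).

Definition colM k (M : 'M[R]_m) := forall s t : 'I_m, (k <= t)%N -> M s t = (s == t)%:R.
Definition colB k (B : 'M[R]_(m, n)) :=
  forall (s : 'I_m) (c : 'I_n), (c < k)%N -> B s c = ((s : nat) == c)%:R.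

Lemma detP k M (i : 'I_m) : (k <= i)%N -> colM k M ->
  \det (Pm k M i) = \det (row' ord_max (col' ord_max (Pm k M i))).
Proof.
move=> ki cM; rewrite (expand_det_col _ ord_max) (bigD1 ord_max) //= big1.
  rewrite addr0 /cofactor !mxE bsel_max cM // eqxx mul1r.
  by rewrite exprD -exprMn mulrNN mulr1 expr1n mul1r.
move=> a na; rewrite !mxE bsel_max cM //.
have -> : (bsel i a == i) = false.
  apply/negbTE; apply: contra na => /eqP h; apply/eqP.
  by apply: (bsel_inj ki); rewrite h bsel_max.
by rewrite mul0r.
Qed.

Lemma D_indep k M (i i' : 'I_m) : (k <= i)%N -> (k <= i')%N ->
  row' ord_max (col' ord_max (Pm k M i)) = row' ord_max (col' ord_max (Pm k M i')).
Proof.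
move=> ki ki'; apply/matrixP => a b; rewrite !mxE.
have ha : (lift ord_max a < k)%N by rewrite lift_max /= ltn_ord.
have hb : (lift ord_max b < k)%N by rewrite lift_max /= ltn_ord.
by rewrite (bsel_lt ha ki ki') (bsel_lt hb ki ki').
Qed.

Lemma mulB k (A : 'M[R]_(m, n)) M B (i : 'I_m) (j : 'I_n) : (k <= i)%N -> colM k M -> B = M *m A ->
  (\matrix_(a < k.+1, b < k.+1) B (bsel i a) (bsel j b)) =
  Pm k M i *m (\matrix_(a < k.+1, b < k.+1) A (bsel i a) (bsel j b)).
Proof.
move=> ki cM ->; apply/matrixP => a b; rewrite !mxE.
rewrite (bigID (mem (bsel i @: [set: 'I_k.+1]))) /=.
rewrite [X in _ + X]big1 ?addr0.
  rewrite big_imset /=; last by move=> x y _ _; apply: bsel_inj.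
  by apply: eq_big => [x|x _]; [rewrite inE | rewrite !mxE].
move=> t tS.
case: (ltnP t k) => tk.
  exfalso; move/negP: tS; apply; apply/imsetP.
  have tk1 : (t < k.+1)%N by lia.
  exists (Ordinal tk1); first by rewrite inE.
  by apply: val_inj => /=; rewrite val_bsel // tk.
rewrite cM //.
have -> : (bsel i a == t) = false.
  apply/negbTE; apply: contra tS => /eqP <-; apply/imsetP; exists a => //; by rewrite inE.
by rewrite mul0r.
Qed.

Lemma NB_trig k (B : 'M[R]_(m,n)) (i : 'I_m) (j : 'I_n) : (k <= i)%N -> (k <= j)%N -> colB k B ->
  \det (\matrix_(a < k.+1, b < k.+1) B (bsel i a) (bsel j b)) = B i j.
Proof.
move=> ki kj cB; rewrite -det_tr det_trig.
  rewrite big_ord_recr /= big1 ?mul1r.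
    by rewrite !mxE !bsel_max.
  move=> a _; rewrite !mxE cB; last by rewrite val_bsel //= ltn_ord.
  by rewrite !val_bsel //= ltn_ord eqxx.
apply/is_trig_mxP => a b ab.
have ak : (a < k)%N by apply: leq_trans ab _; rewrite -ltnS.
rewrite !mxE cB; last by rewrite val_bsel // ak.
rewrite !val_bsel // ak; case: ifP => bk; apply/eqP; rewrite pnatr_eq0 eqb0; apply/eqP; lia.
Qed.

End S.


Section S3.
Variables (R : realFieldType) (m n : nat).
Implicit Types (A B : 'M[R]_(m, n)).

Lemma keyB k A M B (i0 i : 'I_m) (j : 'I_n) : (k <= i0)%N -> (k <= i)%N -> (k <= j)%N ->
  B = M *m A -> colM k M -> colB k B ->
  B i j = \det (row' ord_max (col' ord_max (Pm k M i0))) * bminor A k i j.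
Proof.
move=> ki0 ki kj eB cM cB.
rewrite -(NB_trig ki kj cB) (mulB j ki cM eB) det_mulmx detP // (D_indep M ki ki0).
by [].
Qed.

Lemma G1E k (b : R) (s c : 'I_m) :
  gj_G1 m k b s c = (s == c)%:R * (if (s : nat) == k then b^-1 else 1).
Proof. by rewrite mxE; case: eqP => _; rewrite ?mul1r ?mul0r. Qed.

Lemma G1mul p k (b : R) (C : 'M[R]_(m, p)) s c :
  (gj_G1 m k b *m C) s c = (if (s : nat) == k then b^-1 else 1) * C s c.
Proof.
rewrite mxE (bigD1 s) //= big1 ?addr0 => [|l ls]; rewrite G1E.
  by rewrite eqxx mul1r.
by rewrite eq_sym (negbTE ls) mul0r mul0r.
Qed.

Lemma G2E k B (p : 'I_m) (q : 'I_n) (s l : 'I_m) : (p : nat) = k -> (q : nat) = k ->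
  gj_G2 k B s l = if s == l then 1 else if l == p then - B s q else 0.
Proof.
move=> vp vq; rewrite mxE.
have -> : insub k = Some q by rewrite -vq valK.
case: (s == l) => //.
have -> : (val l == k) = (l == p) by rewrite -vp.
by [].
Qed.

Lemma G2mul k B (p : 'I_m) (q : 'I_n) r (C : 'M[R]_(m, r)) s c : (p : nat) = k -> (q : nat) = k ->
  (gj_G2 k B *m C) s c = C s c - (if s == p then 0 else B s q) * C p c.
Proof.
move=> vp vq; rewrite mxE.
case: (eqVneq s p) => [->|sp].
  rewrite (bigD1 p) //= big1 => [|l lp]; rewrite (G2E _ _ _ vp vq).
    by rewrite eqxx mul1r addr0 mul0r subr0.
  by rewrite [p == l]eq_sym (negbTE lp) mul0r.
rewrite (bigD1 s) //= (bigD1 p) /=; last by rewrite eq_sym sp.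
rewrite big1 => [|l /andP [ls lp]]; rewrite !(G2E _ _ _ vp vq).
  by rewrite eqxx (negbTE sp) eqxx mul1r addr0 mulNr.
by rewrite [s == l]eq_sym (negbTE ls) (negbTE lp) mul0r.
Qed.

Lemma gjS A k : gj A (2 * k.+1) =
  obind (gj_step2 k) (obind (gj_step1 k) (gj A (2 * k))).
Proof.
have -> : (2 * k.+1 = (2 * k).+2)%N by lia.
have h1 : odd (2 * k) = false by rewrite oddM.
have h2 : (2 * k)./2 = k by rewrite mul2n half_double.
have h3 : uphalf (2 * k) = k by rewrite mul2n uphalf_double.
by rewrite /= h1 h2 h3.
Qed.

Definition Inv A k B := exists M : 'M[R]_m,
  [/\ M \in unitmx, B = M *m A, colM k M & colB k B].

Lemma step A k B (p : 'I_m) (q : 'I_n) : (p : nat) = k -> (q : nat) = k ->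
  gj A (2 * k) = Some B -> Inv A k B -> B p q != 0 ->
  exists B', gj A (2 * k.+1) = Some B' /\ Inv A k.+1 B'.
Proof.
move=> vp vq hg [M [uM eB cM cB]] nz.
set b := B p q.
set B1 := gj_G1 m k b *m B.
exists (gj_G2 k B1 *m B1); split.
  rewrite gjS hg /= /gj_step1.
  have -> : insub k = Some p by rewrite -vp valK.
  have -> : insub k = Some q by rewrite -vq valK.
  rewrite nz /= /gj_step2.
  have -> : ((k < m) && (k < n))%N by rewrite -{1}vp ltn_ord -vq ltn_ord.
  by [].
exists (gj_G2 k B1 *m (gj_G1 m k b *m M)); split.
- rewrite !unitmx_mul uM andbT; apply/andP; split.
    pose G' : 'M[R]_m := \matrix_(s, c) ((s == c)%:R + (if s == p then 0 else B1 s q) * (c == p)%:R).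
    apply: (proj1 (@mulmx1_unit _ _ _ G' _)).
    apply/matrixP => s c; rewrite (G2mul _ _ _ _ vp vq) !mxE eqxx mul0r addr0 [p == c]eq_sym.
    by rewrite addrK.
  apply: (proj1 (@mulmx1_unit _ _ _ (gj_G1 m k b^-1) _)).
  apply/matrixP => s c; rewrite G1mul G1E !mxE.
  case: ifP => _; last by rewrite !mul1r mulr1.
  by rewrite invrK mulrCA mulVf // mulr1.
- by rewrite /B1 eB !mulmxA.
- move=> s t kt; rewrite (G2mul _ _ _ _ vp vq) !G1mul !cM ?(ltnW kt) //.
  have -> : (p == t) = false by apply/eqP => ept; move: kt; rewrite -ept vp; lia.
  rewrite !mulr0 subr0.
  case: (eqVneq s t) => [est|]; last by rewrite mulr0.
  have -> : ((s : nat) == k) = false by apply/eqP; rewrite est; lia.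
  by rewrite mul1r.
- move=> s c ck; rewrite (G2mul _ _ _ _ vp vq) /B1 !G1mul.
  case: (ltnP c k) => ck'.
    rewrite (cB s c ck') (cB p c ck').
    have -> : ((p : nat) == c) = false by apply/eqP; lia.
    rewrite !mulr0 subr0.
    case: (eqVneq (s : nat) c) => [esc|]; last by rewrite mulr0.
    have -> : ((s : nat) == k) = false by apply/eqP; lia.
    by rewrite mul1r.
  have ec : c = q by apply: val_inj => /=; lia.
  subst c.
  rewrite vp eqxx -/b mulVf //.
  case: (eqVneq s p) => [->|sp]; first by rewrite vp eqxx -/b mulVf // mul0r subr0 vq eqxx.
  have sk : ((s : nat) == k) = false.
    by apply/eqP => h; move/eqP: sp; apply; apply: val_inj => /=; lia.
  rewrite sk mul1r mulr1 subrr vq sk.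
  by [].
Qed.

End S3.


Section S4.
Variables (R : realFieldType) (m n : nat) (A : 'M[R]_(m, n)).
Hypothesis hPA : properly_arranged A.

Lemma PAu k (i : 'I_m) (j : 'I_n) (p : 'I_m) (q : 'I_n) : (k < minn m n)%N ->
  (k <= i)%N -> (k <= j)%N -> (p : nat) = k -> (q : nat) = k ->
  `|bminor A k i j| <= `|bminor A k p q|.
Proof.
case: hPA => h1 h2; case: k => [|k] hk ki kj vp vq.
  by rewrite /bminor !det_mx11 !mxE !bsel0; apply: h1.
by apply: h2.
Qed.

Lemma pivot_nz k B (p : 'I_m) (q : 'I_n) : (p : nat) = k -> (q : nat) = k ->
  (k < \rank A)%N -> Inv A k B -> B p q != 0.
Proof.
move=> vp vq kr [M [uM eB cM cB]].
have km : (k < m)%N by have := rank_leq_row A; lia.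
have kn : (k < n)%N by have := rank_leq_col A; lia.
have kmn : (k < minn m n)%N by lia.
have kp : (k <= p)%N by lia.
apply/negP => /eqP z.
set D := \det (row' ord_max (col' ord_max (Pm k M p))).
have key (i : 'I_m) (j : 'I_n) : (k <= i)%N -> (k <= j)%N -> B i j = D * bminor A k i j.
  by move=> ki kj; apply: (keyB (i0 := p) kp ki kj eB cM cB).
have zero (i : 'I_m) (j : 'I_n) : (k <= i)%N -> (k <= j)%N -> B i j = 0.
  move=> ki kj; rewrite key //.
  move: z; rewrite key ?vq // => /eqP; rewrite mulf_eq0 => /orP [/eqP->|/eqP h].
    by rewrite mul0r.
  have := PAu kmn ki kj vp vq; rewrite h normr0 normr_le0 => /eqP->.
  by rewrite mulr0.
have rows (i : 'I_m) (c : 'I_n) : (k <= i)%N -> B i c = 0.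
  move=> ki; case: (ltnP c k) => ck; last exact: zero.
  rewrite cB //; have -> : ((i : nat) == c) = false by apply/eqP; lia.
  by [].
have eP : pid_mx k *m B = B.
  apply/matrixP => s c; rewrite mxE (bigD1 s) //= big1 => [|l ls].
    rewrite mxE eqxx /= addr0; case: (ltnP s k) => sk; first by rewrite mul1r.
    by rewrite mul0r rows.
  rewrite mxE; have -> : ((s : nat) == l) = false.
    by apply/eqP => h; move/eqP: ls; apply; apply: val_inj.
  by rewrite mul0r.
have : (\rank A <= k)%N.
  have -> : A = invmx M *m B by rewrite eB mulKmx.
  apply: leq_trans (mxrankM_maxr _ _) _; rewrite -eP.
  apply: leq_trans (mxrankM_maxl _ _) _.
  by rewrite rank_pid_mx //; lia.
lia.
Qed.

Lemma main_inv k : (k <= \rank A)%N -> exists B, gj A (2 * k) = Some B /\ Inv A k B.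
Proof.
elim: k => [|k IH] hk.
  exists A; split; first by rewrite muln0.
  exists 1%:M; split.
  - exact: unitmx1.
  - by rewrite mul1mx.
  - by move=> s t _; rewrite mxE.
  - by move=> s c.
have [B [hg hI]] := IH (ltnW hk).
have km : (k < m)%N by have := rank_leq_row A; lia.
have kn : (k < n)%N by have := rank_leq_col A; lia.
apply: (@step _ _ _ A k B (Ordinal km) (Ordinal kn)) => //.
exact: (@pivot_nz k B (Ordinal km) (Ordinal kn)).
Qed.

End S4.

Theorem theorem2p11 (R : realFieldType) (m n r : nat) (A : 'M[R]_(m, n)) :
  \rank A = r -> (1 <= r)%N -> properly_arranged A ->
  diag_eliminable A r /\
  (forall k : nat, (k < r)%N -> forall B, gj A (2 * k) = Some B ->
     forall (p : 'I_m) (q : 'I_n), val p = k -> val q = k ->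
     forall (i : 'I_m) (j : 'I_n), (k <= i)%N -> (k <= j)%N ->
       `|B i j| <= `|B p q|).
Proof.
move=> rk r1 hPA; subst r.
split.
  move=> k kr.
  have km : (k < m)%N by have := rank_leq_row A; lia.
  have kn : (k < n)%N by have := rank_leq_col A; lia.
  have [B [hg hI]] := main_inv hPA (ltnW kr).
  exists B; split => //.
  exists (Ordinal km), (Ordinal kn); split => //; split => //.
  exact: (pivot_nz hPA (p:=Ordinal km) (q:=Ordinal kn)).
move=> k kr B hg p q vp vq i j ki kj.
have [B0 [hg0 [M [uM eB cM cB]]]] := main_inv hPA (ltnW kr).
rewrite hg in hg0; case: hg0 => eBB; subst B0; rewrite -eBB in cB.
have kmn : (k < minn m n)%N.
  have := rank_leq_row A; have := rank_leq_col A; lia.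
have kp : (k <= p)%N by rewrite /= in vp; lia.
have kq : (k <= q)%N by rewrite /= in vq; lia.
rewrite (keyB (i0 := p) kp ki kj eBB cM cB) (keyB (i0 := p) kp kp kq eBB cM cB).
rewrite !normrM ler_wpM2l //.
exact: PAu.
Qed.
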